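(* For $A\in\{D,C\}$ and all $\sigma,\tau\in\Lambda^r_A$: $\sigma\le^r_A\tau$ if and only if $\sigma\le_A\tau$. That is, $\le^r_D$ and $\le^r_C$ are the restrictions to the restricted types of $\le_D$ and $\le_C$.
   Context: Let $R=\{\bot\sqsubset\top\}$ be the two-point lattice, and write $\psi$ for the type constant $\psi_\top$. Full types: - $\Lambda_R$: $\rho::=\psi_a\mid\omega\mid\rho\wedge\rho$ ($a\in R$); - $\Lambda_D$: $\delta::=\rho\mid\kappa\to\rho\mid\omega\mid\delta\wedge\delta$; - $\Lambda_C$: $\kappa::=\delta\times\kappa\mid\omega\mid\kappa\wedge\kappa$. The relations $\le_R,\le_D,\le_C$ are the least reflexive, transitive relations with $\sigma\wedge\tau\le\sigma,\tau$, $\sigma\le\omega$, $\rho\le\sigma,\tau\Rightarrow\rho\le\sigma\wedge\tau$, and additionally: - $\psi_\bot\sim\omega$ and $\psi_{a\sqcup b}\sim\psi_a\wedge\psi_b$; - $\le_R\subseteq\le_D$; - $\omega\le_D\omega\to\omega$; - $\psi_a\le_D\omega\to\psi_a\le_D\psi_a$; - $\omega\le_C\omega\times\omega$; - $(\kappa\to\rho_1)\wedge(\kappa\to\rho_2)\le_D\kappa\to(\rho_1\wedge\rho_2)$; - $(\delta_1\times\kappa_1)\wedge(\delta_2\times\kappa_2)\le_C(\delta_1\wedge\delta_2)\times(\kappa_1\wedge\kappa_2)$; - if $\kappa_2\le_C\kappa_1$ and $\rho_1\le_R\rho_2$ then $\kappa_1\to\rho_1\le_D\kappa_2\to\rho_2$;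 - $\times$ is covariant in both arguments. Restricted types: $\Lambda^r_D$: $\delta::=\kappa\to\psi\mid\delta\wedge\delta$; $\Lambda^r_C$: $\kappa::=\omega\mid\delta\times\kappa\mid\kappa\wedge\kappa$. Thus $\Lambda^r_A\subseteq\Lambda_A$. $\le^r_D$ and $\le^r_C$ are the least relations on $\Lambda^r_D$ and $\Lambda^r_C$ that are reflexive and transitive, satisfy $\sigma\wedge\tau\le\sigma$, $\sigma\wedge\tau\le\tau$, and $\sigma\le\tau_1,\tau_2\Rightarrow\sigma\le\tau_1\wedge\tau_2$, and in addition: - $\kappa\le^r_C\omega$; - $(\delta_1\times\kappa_1)\wedge(\delta_2\times\kappa_2)\le^r_C(\delta_1\wedge\delta_2)\times(\kappa_1\wedge\kappa_2)$; - if $\delta_1\le^r_D\delta_2$ and $\kappa_1\le^r_C\kappa_2$ then $\delta_1\times\kappa_1\le^r_C\delta_2\times\kappa_2$; - if $\kappa_2\le^r_C\kappa_1$ then $\kappa_1\to\psi\le^r_D\kappa_2\to\psi$. *)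

(* Defs.v *)
(* The two-point lattice R = {bot ⊑ top} is represented by bool:
   false = ⊥, true = ⊤, join = orb. *)

Inductive tyR : Type :=
| RPsi : bool -> tyR
| ROm : tyR
| RAnd : tyR -> tyR -> tyR.

Inductive tyD : Type :=
| DR : tyR -> tyD
| DArr : tyC -> tyR -> tyD
| DOm : tyD
| DAnd : tyD -> tyD -> tyD
with tyC : Type :=
| CProd : tyD -> tyC -> tyC
| COm : tyC
| CAnd : tyC -> tyC -> tyC.

Definition psi : tyR := RPsi true.

Inductive leR : tyR -> tyR -> Prop :=
| leR_refl : forall r, leR r r
| leR_trans : forall r1 r2 r3, leR r1 r2 -> leR r2 r3 -> leR r1 r3
| leR_andl : forall r1 r2, leR (RAnd r1 r2) r1
| leR_andr : forall r1 r2, leR (RAnd r1 r2) r2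
| leR_om : forall r, leR r ROm
| leR_glb : forall r r1 r2, leR r r1 -> leR r r2 -> leR r (RAnd r1 r2)
| leR_bot_om : leR (RPsi false) ROm
| leR_om_bot : leR ROm (RPsi false)
| leR_join_and : forall a b, leR (RPsi (orb a b)) (RAnd (RPsi a) (RPsi b))
| leR_and_join : forall a b, leR (RAnd (RPsi a) (RPsi b)) (RPsi (orb a b)).

Inductive leD : tyD -> tyD -> Prop :=
| leD_refl : forall d, leD d d
| leD_trans : forall d1 d2 d3, leD d1 d2 -> leD d2 d3 -> leD d1 d3
| leD_andl : forall d1 d2, leD (DAnd d1 d2) d1
| leD_andr : forall d1 d2, leD (DAnd d1 d2) d2
| leD_om : forall d, leD d DOm
| leD_glb : forall d d1 d2, leD d d1 -> leD d d2 -> leD d (DAnd d1 d2)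
| leD_R : forall r1 r2, leR r1 r2 -> leD (DR r1) (DR r2)
| leD_om_arr : leD DOm (DArr COm ROm)
| leD_psi_arr : forall a, leD (DR (RPsi a)) (DArr COm (RPsi a))
| leD_arr_psi : forall a, leD (DArr COm (RPsi a)) (DR (RPsi a))
| leD_arr_and : forall k r1 r2,
    leD (DAnd (DArr k r1) (DArr k r2)) (DArr k (RAnd r1 r2))
| leD_arr : forall k1 k2 r1 r2, leC k2 k1 -> leR r1 r2 ->
    leD (DArr k1 r1) (DArr k2 r2)
with leC : tyC -> tyC -> Prop :=
| leC_refl : forall k, leC k k
| leC_trans : forall k1 k2 k3, leC k1 k2 -> leC k2 k3 -> leC k1 k3
| leC_andl : forall k1 k2, leC (CAnd k1 k2) k1
| leC_andr : forall k1 k2, leC (CAnd k1 k2) k2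
| leC_om : forall k, leC k COm
| leC_glb : forall k k1 k2, leC k k1 -> leC k k2 -> leC k (CAnd k1 k2)
| leC_om_prod : leC COm (CProd DOm COm)
| leC_prod_and : forall d1 d2 k1 k2,
    leC (CAnd (CProd d1 k1) (CProd d2 k2)) (CProd (DAnd d1 d2) (CAnd k1 k2))
| leC_prod : forall d1 d2 k1 k2, leD d1 d2 -> leC k1 k2 ->
    leC (CProd d1 k1) (CProd d2 k2).

Inductive tyDr : Type :=
| DrArr : tyCr -> tyDr            (* kappa -> psi *)
| DrAnd : tyDr -> tyDr -> tyDr
with tyCr : Type :=
| CrOm : tyCr
| CrProd : tyDr -> tyCr -> tyCr
| CrAnd : tyCr -> tyCr -> tyCr.

Fixpoint embD (d : tyDr) : tyD :=
  match d with
  | DrArr k => DArr (embC k) psi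
  | DrAnd d1 d2 => DAnd (embD d1) (embD d2)
  end
with embC (k : tyCr) : tyC :=
  match k with
  | CrOm => COm
  | CrProd d k => CProd (embD d) (embC k)
  | CrAnd k1 k2 => CAnd (embC k1) (embC k2)
  end.

Inductive leDr : tyDr -> tyDr -> Prop :=
| leDr_refl : forall d, leDr d d
| leDr_trans : forall d1 d2 d3, leDr d1 d2 -> leDr d2 d3 -> leDr d1 d3
| leDr_andl : forall d1 d2, leDr (DrAnd d1 d2) d1
| leDr_andr : forall d1 d2, leDr (DrAnd d1 d2) d2
| leDr_glb : forall d d1 d2, leDr d d1 -> leDr d d2 -> leDr d (DrAnd d1 d2)
| leDr_arr : forall k1 k2, leCr k2 k1 -> leDr (DrArr k1) (DrArr k2)
with leCr : tyCr -> tyCr -> Prop :=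
| leCr_refl : forall k, leCr k k
| leCr_trans : forall k1 k2 k3, leCr k1 k2 -> leCr k2 k3 -> leCr k1 k3
| leCr_andl : forall k1 k2, leCr (CrAnd k1 k2) k1
| leCr_andr : forall k1 k2, leCr (CrAnd k1 k2) k2
| leCr_glb : forall k k1 k2, leCr k k1 -> leCr k k2 -> leCr k (CrAnd k1 k2)
| leCr_om : forall k, leCr k CrOm
| leCr_prod_and : forall d1 d2 k1 k2,
    leCr (CrAnd (CrProd d1 k1) (CrProd d2 k2)) (CrProd (DrAnd d1 d2) (CrAnd k1 k2))
| leCr_prod : forall d1 d2 k1 k2, leDr d1 d2 -> leCr k1 k2 ->
    leCr (CrProd d1 k1) (CrProd d2 k2).

(* Main.v *)
Require Import Defs.
From Stdlib Require Import List.
Import ListNotations.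

Scheme leD_mut := Induction for leD Sort Prop
with leC_mut := Induction for leC Sort Prop.
Combined Scheme leDC_mut from leD_mut, leC_mut.
Scheme leDr_mut := Induction for leDr Sort Prop
with leCr_mut := Induction for leCr Sort Prop.
Combined Scheme leDCr_mut from leDr_mut, leCr_mut.
Scheme tyDr_mut := Induction for tyDr Sort Prop
with tyCr_mut := Induction for tyCr Sort Prop.
Combined Scheme tyDCr_mut from tyDr_mut, tyCr_mut.

Fixpoint bR (r : tyR) : bool :=
  match r with RPsi a => a | ROm => false | RAnd r1 r2 => orb (bR r1) (bR r2) end.

Fixpoint arrs (s : tyDr) : list tyCr :=
  match s with DrArr k => [k] | DrAnd a b => arrs a ++ arrs b end.

Fixpoint headC (k : tyCr) : list tyCr :=
  match k with CrOm => [] | CrProd s _ => arrs s | CrAnd a b => headC a ++ headC b end.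

Fixpoint tailC (k : tyCr) : tyCr :=
  match k with CrOm => CrOm | CrProd _ k => k | CrAnd a b => CrAnd (tailC a) (tailC b) end.

Fixpoint compC (k : tyCr) (n : nat) : list tyCr :=
  match n with 0 => headC k | S n => compC (tailC k) n end.

Fixpoint ID (d : tyD) (l : list tyCr) {struct d} : Prop :=
  match d with
  | DR r => bR r = true -> exists k, In k l /\ leCr CrOm k
  | DArr c r => bR r = true -> exists k, In k l /\ forall k0, DC c k0 -> leCr k0 k
  | DOm => True
  | DAnd d1 d2 => ID d1 l /\ ID d2 l
  end
with DC (c : tyC) (k : tyCr) {struct c} : Prop :=
  match c with
  | COm => True
  | CAnd c1 c2 => DC c1 k /\ DC c2 k
  | CProd d c' => ID d (headC k) /\ DC c' (tailC k)
  end.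

Lemma leR_b : forall r1 r2, leR r1 r2 -> bR r2 = true -> bR r1 = true.
Proof.
  induction 1; simpl; intros; auto; try discriminate;
    repeat match goal with H : (_ || _)%bool = true |- _ => apply Bool.orb_true_iff in H; destruct H end;
    subst; auto using Bool.orb_true_r.
  - rewrite H; auto.
  - rewrite H; auto using Bool.orb_true_r.
Qed.

Lemma sound_sem :
  (forall d d', leD d d' -> forall l, ID d l -> ID d' l) /\
  (forall c c', leC c c' -> forall k, DC c k -> DC c' k).
Proof.
  apply leDC_mut; simpl; intros; auto; try tauto.
  - apply H. apply (leR_b _ _ l); auto.
  - discriminate.
  - destruct (H H0) as [k [Hk Hk']]. exists k; split; auto.
    intros; eapply leCr_trans; [apply leCr_om|]; auto.
  - destruct (H H0) as [k [Hk Hk']]. exists k; split; auto.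
  - destruct H as [H1 H2]. apply Bool.orb_true_iff in H0. destruct H0; auto.
  - apply (leR_b _ _ l0) in H1. destruct (H0 H1) as [k [Hk Hk']].
    exists k; split; auto.
  - destruct H1; split; auto.
Qed.

Lemma sound_r :
  (forall s t, leDr s t -> leD (embD s) (embD t)) /\
  (forall s t, leCr s t -> leC (embC s) (embC t)).
Proof.
  apply leDCr_mut; simpl; intros; eauto using leD, leC, leR.
Qed.

Lemma arrs_le : forall s x, In x (arrs s) -> leDr s (DrArr x).
Proof.
  induction s; simpl; intros.
  - destruct H as [H|[]]; subst; apply leDr_refl.
  - apply in_app_or in H; destruct H.
    + eapply leDr_trans; [apply leDr_andl|]; auto.
    + eapply leDr_trans; [apply leDr_andr|]; auto.
Qed.

Lemma ID_nil : forall s, ID (embD s) [] -> False.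
Proof.
  induction s; simpl; intros.
  - destruct (H eq_refl) as [k [[] _]].
  - destruct H; auto.
Qed.

Lemma compC_and : forall n a b, compC (CrAnd a b) n = compC a n ++ compC b n.
Proof. induction n; simpl; intros; auto. Qed.

Lemma arrs_nonnil : forall s, arrs s = [] -> False.
Proof.
  induction s; simpl; intros; try discriminate.
  apply app_eq_nil in H; destruct H; auto.
Qed.

Lemma head_nil_om : forall k, headC k = [] -> leCr CrOm k /\ leCr CrOm (tailC k).
Proof.
  induction k; simpl; intros.
  - split; apply leCr_refl.
  - exfalso; eapply arrs_nonnil; eauto.
  - apply app_eq_nil in H; destruct H.
    destruct (IHk1 H), (IHk2 H0); split; apply leCr_glb; auto.
Qed.

Lemma headC_split : forall k0, headC k0 <> [] ->
  exists s0, (forall x, In x (headC k0) -> leDr s0 (DrArr x)) /\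
             leCr k0 (CrProd s0 (tailC k0)).
Proof.
  induction k0; simpl; intros.
  - congruence.
  - exists t; split. apply arrs_le. apply leCr_refl.
  - destruct (headC k0_1) eqn:E1; destruct (headC k0_2) eqn:E2.
    + simpl in H; congruence.
    + destruct IHk0_2 as [s2 [H2 H2']]; try congruence.
      destruct (head_nil_om _ E1) as [_ T1].
      exists s2; split; [intros; apply H2; auto|].
      eapply leCr_trans; [apply leCr_andr|].
      eapply leCr_trans; [apply H2'|]. apply leCr_prod; [apply leDr_refl|].
      apply leCr_glb; [|apply leCr_refl].
      eapply leCr_trans; [apply leCr_om|]; auto.
    + destruct IHk0_1 as [s1 [H1 H1']]; try congruence.
      destruct (head_nil_om _ E2) as [_ T2].
      exists s1; split; [intros; apply H1; rewrite app_nil_r in H0; auto|].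
      eapply leCr_trans; [apply leCr_andl|].
      eapply leCr_trans; [apply H1'|]. apply leCr_prod; [apply leDr_refl|].
      apply leCr_glb; [apply leCr_refl|].
      eapply leCr_trans; [apply leCr_om|]; auto.
    + destruct IHk0_1 as [s1 [H1 H1']]; try congruence.
      destruct IHk0_2 as [s2 [H2 H2']]; try congruence.
      exists (DrAnd s1 s2); split.
      * intros x Hx. apply in_app_or in Hx; destruct Hx.
        -- eapply leDr_trans; [apply leDr_andl|]; auto.
        -- eapply leDr_trans; [apply leDr_andr|]; auto.
      * eapply leCr_trans; [|apply leCr_prod_and].
        apply leCr_glb.
        -- eapply leCr_trans; [apply leCr_andl|]; auto.
        -- eapply leCr_trans; [apply leCr_andr|]; auto.
Qed.

Lemma key :
  (forall s, (forall l, incl (arrs s) l -> ID (embD s) l) /\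
             (forall l, ID (embD s) l -> forall s0,
                 (forall x, In x l -> leDr s0 (DrArr x)) -> leDr s0 s)) /\
  (forall k, (forall k0, (forall n, incl (compC k n) (compC k0 n)) -> DC (embC k) k0) /\
             (forall k0, DC (embC k) k0 -> leCr k0 k)).
Proof.
  apply tyDCr_mut; simpl; intros.
  - destruct H as [HA HB]. split.
    + intros l Hl _. exists t; split; [apply Hl; simpl; auto|]. auto.
    + intros l Hl s0 Hs0. destruct (Hl eq_refl) as [k [Hk Hk']].
      eapply leDr_trans; [apply Hs0; eauto|]. apply leDr_arr.
      apply Hk'. apply HA. intros n; apply incl_refl.
  - destruct H as [A1 B1], H0 as [A2 B2]. split.
    + intros l Hl. split; [apply A1|apply A2]; intros x Hx; apply Hl; apply in_or_app; auto.
    + intros l [H1 H2] s0 Hs0. apply leDr_glb; eauto.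
  - split; intros; auto. apply leCr_om.
  - destruct H as [A1 B1], H0 as [A2 B2]. split.
    + intros k0 Hk0. split.
      * apply A1. apply (Hk0 0).
      * apply A2. intros n. apply (Hk0 (S n)).
    + intros k0 [H1 H2].
      assert (Hne : headC k0 <> []) by (intro E; rewrite E in H1; eapply ID_nil; eauto).
      destruct (headC_split _ Hne) as [s0 [Hs0 Hs0']].
      eapply leCr_trans; [apply Hs0'|]. apply leCr_prod; eauto.
  - destruct H as [A1 B1], H0 as [A2 B2]. split.
    + intros k0 Hk0. split; [apply A1|apply A2]; intros n x Hx; apply Hk0;
        rewrite compC_and; apply in_or_app; auto.
    + intros k0 [H1 H2]. apply leCr_glb; eauto.
Qed.

Theorem theorem6p3 :
  (forall s t : tyDr, leDr s t <-> leD (embD s) (embD t)) /\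
  (forall s t : tyCr, leCr s t <-> leC (embC s) (embC t)).
Proof.
  destruct sound_r as [SD SC]. destruct sound_sem as [MD MC]. destruct key as [KD KC].
  split; intros s t; split; auto; intros H.
  - destruct (KD s) as [A _]. destruct (KD t) as [_ B].
    apply (B (arrs s)). apply (MD _ _ H). apply A, incl_refl. apply arrs_le.
  - destruct (KC s) as [A _]. destruct (KC t) as [_ B].
    apply B. apply (MC _ _ H). apply A. intros; apply incl_refl.
Qed.
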